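(* $C(X)_\mathcal{P}$ is a clean ring if and only if it is an almost clean ring.
   Context: Let $(X,\tau)$ be a $T_1$ topological space and $\mathcal{P}$ an ideal of closed subsets of $X$ (a nonempty family of closed sets closed under finite unions and under taking closed subsets). For $f\colon X\to\mathbb{R}$, $D_f$ denotes the set of points of discontinuity of $f$, and $C(X)_\mathcal{P}=\{f\colon X\to\mathbb{R} : \overline{D_f}\in\mathcal{P}\}$, a commutative ring with unity under pointwise operations. A ring is clean if every element is the sum of a unit and an idempotent, and almost clean if every element is the sum of a regular element (a non-zero-divisor) and an idempotent. *)

(* Defs.v *)
From HB Require Import structures.
From mathcomp Require Import all_boot all_order all_algebra.
From mathcomp Require Import all_classical all_reals all_analysis.
From mathcomp Require Import Rstruct Rstruct_topology.
From Stdlib Require Import Reals.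
Set Implicit Arguments. Unset Strict Implicit. Unset Printing Implicit Defensive.
Import Order.TTheory GRing.Theory Num.Theory.
Local Open Scope classical_set_scope.
Local Open Scope ring_scope.

Definition closed_ideal {X : topologicalType} (P : set (set X)) : Prop :=
  [/\ P !=set0,
      (forall A, P A -> closed A),
      (forall A B, P A -> P B -> P (A `|` B)) &
      (forall A B, P A -> closed B -> B `<=` A -> P B)].

Definition discont {X : topologicalType} (f : X -> Rdefinitions.R) : set X :=
  [set x | ~ {for x, continuous f}].

Definition CP {X : topologicalType} (P : set (set X)) (f : X -> Rdefinitions.R) : Prop :=
  P (closure (discont f)).

Definition CP_unit {X : topologicalType} (P : set (set X)) (u : X -> Rdefinitions.R) : Prop :=
  CP P u /\ exists v, CP P v /\ forall x, u x * v x = 1.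

Definition CP_idempotent {X : topologicalType} (P : set (set X)) (e : X -> Rdefinitions.R) : Prop :=
  CP P e /\ forall x, e x * e x = e x.

Definition CP_regular {X : topologicalType} (P : set (set X)) (r : X -> Rdefinitions.R) : Prop :=
  CP P r /\ forall g, CP P g -> (forall x, r x * g x = 0) -> forall x, g x = 0.

Definition CP_clean {X : topologicalType} (P : set (set X)) : Prop :=
  forall f, CP P f -> exists u e, CP_unit P u /\ CP_idempotent P e /\
    forall x, f x = u x + e x.

Definition CP_almost_clean {X : topologicalType} (P : set (set X)) : Prop :=
  forall f, CP P f -> exists r e, CP_regular P r /\ CP_idempotent P e /\
    forall x, f x = r x + e x.

(* Main.v *)
Require Import Defs.
From mathcomp Require Import all_boot all_order all_algebra.
From mathcomp Require Import all_classical all_reals all_analysis.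
From mathcomp Require Import Rstruct Rstruct_topology.
From mathcomp Require Import lra.
Import Order.TTheory GRing.Theory Num.Theory.
Local Open Scope classical_set_scope.
Local Open Scope ring_scope.
Notation RR := Rdefinitions.R.
Section S.
Variable X : topologicalType.
Implicit Types f g : X -> RR.
Lemma cD f g x : {for x, continuous f} -> {for x, continuous g} -> {for x, continuous (fun y => f y + g y)}.
Proof. rewrite /prop_for /= => hf hg. exact: (@cvgD _ RR^o _ _ _ _ _ _ _ hf hg). Qed.
Lemma cM f g x : {for x, continuous f} -> {for x, continuous g} -> {for x, continuous (fun y => f y * g y)}.
Proof. rewrite /prop_for /= => hf hg. exact: (@cvgM _ _ _ _ _ _ _ _ hf hg). Qed.
Lemma cN f x : {for x, continuous f} -> {for x, continuous (fun y => - f y)}.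
Proof. rewrite /prop_for /= => hf. exact: (@cvgN _ RR^o _ _ _ _ _ hf). Qed.
Lemma cC (c : RR) x : {for x, continuous (fun _ : X => c)}.
Proof. rewrite /prop_for /=. exact: cvg_cst. Qed.
Lemma cA f x : {for x, continuous f} -> {for x, continuous (fun y => `|f y|)}.
Proof. rewrite /prop_for /= => hf. exact: (@cvg_norm _ RR^o _ _ _ _ _ hf). Qed.
Lemma cV f x : f x != 0 -> {for x, continuous f} -> {for x, continuous (fun y => (f y)^-1)}.
Proof. rewrite /prop_for /= => h hf. exact: (@cvgV _ _ _ _ _ _ h hf). Qed.

Lemma CP_gen (P : set (set X)) (hP : closed_ideal P) a b h :
  CP P a -> CP P b ->
  (forall x, {for x, continuous a} -> {for x, continuous b} -> {for x, continuous h}) ->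
  CP P h.
Proof.
case: hP => _ _ hU hS ha hb hc.
rewrite /CP in ha hb *.
have hab := hU _ _ ha hb.
apply: (hS _ _ hab); first exact: closed_closure.
rewrite -closureU; apply: closureS => x /= hx.
case: (pselect ({for x, continuous a})) => Ha; last by left.
case: (pselect ({for x, continuous b})) => Hb; last by right.
by exfalso; apply: hx; apply: hc.
Qed.
End S.

Lemma idem01 (a : RR) : a * a = a -> a = 0 \/ a = 1.
Proof.
move=> h.
have : a * (a - 1) = 0 by rewrite mulrBr mulr1 h subrr.
move/eqP; rewrite mulf_eq0 => /orP [/eqP -> | ]; first by left.
by rewrite subr_eq0 => /eqP ->; right.
Qed.

Definition phi (t : RR) := (`|3 * t - 1| - `|3 * t - 2| + 1) * 2^-1.
Definition psi (t : RR) := (1 - 3 * t) + `|1 - 3 * t|.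
Definition chi (t : RR) := (3 * t - 2) + `|3 * t - 2|.

Lemma phipsi t : phi t * psi t = 0.
Proof.
rewrite /phi /psi.
have [h|h] := lerP 0 (3 * t - 1).
  have -> : `|1 - 3 * t| = 3 * t - 1.
    by rewrite -normrN opprB ger0_norm.
  have -> : (1 - 3 * t) + (3 * t - 1) = (0:RR) by lra.
  by rewrite mulr0.
rewrite (ltr0_norm h).
have h2 : 3 * t - 2 < 0 by lra.
rewrite (ltr0_norm h2).
have -> : - (3 * t - 1) - - (3 * t - 2) + 1 = 0 by lra.
by rewrite !mul0r.
Qed.

Lemma phichi t : (phi t - 1) * chi t = 0.
Proof.
rewrite /phi /chi.
have [h|h] := lerP 0 (3 * t - 2).
  have h1 : 0 <= 3 * t - 1 by lra.
  rewrite (ger0_norm h) (ger0_norm h1).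
  have -> : (3 * t - 1 - (3 * t - 2) + 1) * 2^-1 - 1 = (0 : RR).
    have -> : 3 * t - 1 - (3 * t - 2) + 1 = (2 : RR) by lra.
    by rewrite mulfV // subrr.
  by rewrite mul0r.
rewrite (ltr0_norm h).
by rewrite subrr mulr0.
Qed.

Lemma psi0 t : psi t = 0 -> 1 <= 3 * t.
Proof.
rewrite /psi; have [h|h] := lerP 0 (1 - 3 * t).
  rewrite (ger0_norm h) => H; lra.
by rewrite (ltr0_norm h) => _; lra.
Qed.

Lemma chi0 t : chi t = 0 -> 3 * t <= 2.
Proof.
rewrite /chi; have [h|h] := lerP 0 (3 * t - 2).
  rewrite (ger0_norm h) => H; lra.
by rewrite (ltr0_norm h) => _; lra.
Qed.

Ltac crush := repeat first [ apply: cM | apply: cD | apply: cN | apply: cA | apply: cC | assumption ].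

Theorem theorem3p12 (X : topologicalType) (P : set (set X)) :
  accessible_space X -> closed_ideal P ->
  (CP_clean P <-> CP_almost_clean P).
Proof.
move=> _ hP; split.
  move=> hc f hf; have [u [e [[hu [v [hv huv]]] [he hfe]]]] := hc f hf.
  exists u, e; split => //; split => // g hg hug x.
  by rewrite -[g x]mul1r -(huv x) mulrC mulrA [g x * _]mulrC hug mul0r.
move=> ha f hf.
pose g := fun x => phi (f x).
have hg : CP P g.
  apply: (@CP_gen X P hP _ _ _ hf hf) => x h1 _; rewrite /g /phi; crush.
have [r [e [[hr hreg] [[he hee] hge]]]] := ha g hg.
pose h1 := fun x => psi (f x) * (1 - e x).
pose h2 := fun x => chi (f x) * e x.
have hh1 : CP P h1.
  apply: (@CP_gen X P hP _ _ _ hf he) => x H1 H2; rewrite /h1 /psi; crush.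
have hh2 : CP P h2.
  apply: (@CP_gen X P hP _ _ _ hf he) => x H1 H2; rewrite /h2 /chi; crush.
have z1 : forall x, h1 x = 0.
  apply: (hreg _ hh1) => x; rewrite /h1 /=.
  have [E|E] := @idem01 _ (hee x).
    have -> : r x = g x by rewrite hge E addr0.
    by rewrite E subr0 mulr1 /g /= phipsi.
  by rewrite E subrr !mulr0.
have z2 : forall x, h2 x = 0.
  apply: (hreg _ hh2) => x; rewrite /h2 /=.
  have [E|E] := @idem01 _ (hee x).
    by rewrite E !mulr0.
  have -> : r x = g x - 1 by rewrite hge E addrK.
  by rewrite E mulr1 /g /= phichi.
have nz : forall x, f x - e x != 0.
  move=> x; have [E|E] := @idem01 _ (hee x).
    have := z1 x; rewrite /h1 /= E subr0 mulr1 => /psi0 H.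
    apply/eqP => H0; lra.
  have := z2 x; rewrite /h2 /= E mulr1 => /chi0 H.
  apply/eqP => H0; lra.
exists (fun x => f x - e x), e; split; last first.
  by split; [split | move=> x; rewrite subrK].
split.
  apply: (@CP_gen X P hP _ _ _ hf he) => x H1 H2; crush.
exists (fun x => (f x - e x)^-1); split; last by move=> x; rewrite mulfV.
apply: (@CP_gen X P hP _ _ _ hf he) => x H1 H2.
apply: cV; first exact: nz.
crush.
Qed.
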